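(* Let $\xi_m>0$, $\lambda>0$, $0\le\mu\le\xi_m$ and $T>0$. The equation $$\frac{\xi_m}{\lambda}=2T\ln\frac{\cosh(\sqrt{\xi_m^2+\Delta^2}/2T)}{\cosh(\sqrt{\mu^2+\Delta^2}/2T)}+\mu\int_0^{\mu}\tanh\Big(\frac{\sqrt{\xi^2+\Delta^2}}{2T}\Big)\frac{d\xi}{\sqrt{\xi^2+\Delta^2}}$$ has a positive solution $\Delta$ if and only if $$\frac{\xi_m}{\lambda}<2T\ln\frac{\cosh(\xi_m/2T)}{\cosh(\mu/2T)}+\mu\int_0^{\mu}\tanh\Big(\frac{\xi}{2T}\Big)\frac{d\xi}{\xi},$$ and if a positive solution exists it is unique. *)

(* Defs.v *)
From Stdlib Require Import Reals Lra ClassicalEpsilon.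
Open Scope R_scope.

(* Riemann integral of f over [a,b], defined as the value of RiemannInt
   whenever f is Riemann integrable on [a,b] (the value is independent of the
   integrability proof, by RiemannInt_P5); 0 otherwise (never used here,
   since all integrands below are Riemann integrable). *)
Definition Rint (f : R -> R) (a b : R) : R :=
  epsilon (inhabits 0)
    (fun l => exists pr : Riemann_integrable f a b, RiemannInt pr = l).

Definition gapRHS (xim mu T D : R) : R :=
  2 * T * ln (cosh (sqrt (xim ^ 2 + D ^ 2) / (2 * T))
              / cosh (sqrt (mu ^ 2 + D ^ 2) / (2 * T)))
  + mu * Rint (fun xi => tanh (sqrt (xi ^ 2 + D ^ 2) / (2 * T))
                          / sqrt (xi ^ 2 + D ^ 2)) 0 mu.

(* The threshold quantity (Delta = 0 version, with integrand tanh(xi/2T)/xi;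
   its value at the single point xi = 0 does not affect the integral). *)
Definition gapThreshold (xim mu T : R) : R :=
  2 * T * ln (cosh (xim / (2 * T)) / cosh (mu / (2 * T)))
  + mu * Rint (fun xi => tanh (xi / (2 * T)) / xi) 0 mu.

(* Main.v *)
Require Import Defs.
From Coquelicot Require Import Coquelicot.
From Stdlib Require Import Reals Lra ClassicalEpsilon.
Open Scope R_scope.

Lemma cosh_pos x : 0 < cosh x.
Proof. unfold cosh. pose proof (exp_pos x); pose proof (exp_pos (-x)); lra. Qed.

Lemma cosh_sinh_id x : cosh x * cosh x - sinh x * sinh x = 1.
Proof. unfold cosh, sinh. rewrite exp_Ropp. pose proof (exp_pos x). field. lra. Qed.

Lemma is_derive_sinh x : is_derive sinh x (cosh x).
Proof. apply is_derive_Reals, derivable_pt_lim_sinh. Qed.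
Lemma is_derive_cosh x : is_derive cosh x (sinh x).
Proof. apply is_derive_Reals, derivable_pt_lim_cosh. Qed.

Lemma decr_le (f df : R -> R) a b : a <= b -> (forall x, a <= x <= b -> is_derive f x (df x)) ->
  (forall x, a <= x <= b -> df x <= 0) -> f b <= f a.
Proof.
  intros Hab Hd Hs. destruct (Req_dec a b) as [->|Hne]; [lra|].
  destruct (MVT_gen f a b df) as [c [Hc Heq]].
  - intros x Hx. apply Hd. rewrite Rmin_left in Hx by lra. rewrite Rmax_right in Hx by lra. lra.
  - intros x Hx. rewrite Rmin_left in Hx by lra. rewrite Rmax_right in Hx by lra.
    apply derivable_continuous_pt. exists (df x). apply is_derive_Reals, Hd. lra.
  - rewrite Rmin_left in Hc by lra. rewrite Rmax_right in Hc by lra.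
    specialize (Hs c Hc). assert (df c * (b - a) <= 0) by (apply Rmult_le_0_r; lra). lra.
Qed.

Lemma decr_lt (f df : R -> R) a b : a < b -> (forall x, a <= x <= b -> is_derive f x (df x)) ->
  (forall x, a <= x <= b -> df x < 0) -> f b < f a.
Proof.
  intros Hab Hd Hs.
  destruct (MVT_gen f a b df) as [c [Hc Heq]].
  - intros x Hx. apply Hd. rewrite Rmin_left in Hx by lra. rewrite Rmax_right in Hx by lra. lra.
  - intros x Hx. rewrite Rmin_left in Hx by lra. rewrite Rmax_right in Hx by lra.
    apply derivable_continuous_pt. exists (df x). apply is_derive_Reals, Hd. lra.
  - rewrite Rmin_left in Hc by lra. rewrite Rmax_right in Hc by lra.
    specialize (Hs c Hc). assert (df c * (b - a) < 0).
    { assert (0 < - df c * (b - a)) by (apply Rmult_lt_0_compat; lra). lra. } lra.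
Qed.

Lemma sinh_pos y : 0 < y -> 0 < sinh y.
Proof. intros. rewrite <- sinh_0. apply sinh_lt. auto. Qed.

Lemma sinh_cosh_gt y : 0 < y -> y < sinh y * cosh y.
Proof.
  intros Hy.
  set (w := fun t => - (sinh t * cosh t - t)).
  set (dw := fun t => - (cosh t * cosh t + sinh t * sinh t - 1)).
  assert (Hd : forall t, is_derive w t (dw t)).
  { intros t. unfold w, dw, sinh, cosh. auto_derive; auto.
    rewrite !exp_Ropp. pose proof (exp_pos t). field. lra. }
  assert (H1 : w (y/2) <= w 0).
  { apply (decr_le w dw); [lra| intros; apply Hd|]. intros x _. unfold dw.
    pose proof (cosh_sinh_id x). nra. }
  assert (H2 : w y < w (y/2)).
  { apply (decr_lt w dw); [lra| intros; apply Hd|]. intros x Hx. unfold dw.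
    pose proof (cosh_sinh_id x). pose proof (sinh_pos x ltac:(lra)). nra. }
  unfold w in H1, H2. rewrite sinh_0 in H1. lra.
Qed.

Lemma psi_decr a b : 0 < a -> a < b -> tanh b / b < tanh a / a.
Proof.
  intros Ha Hab.
  set (f := fun t => (exp t - exp (-t)) / 2 / ((exp t + exp (-t)) / 2) / t).
  set (df := fun t => (t - sinh t * cosh t) / (t * t * (cosh t * cosh t))).
  assert (Hd : forall t, 0 < t -> is_derive f t (df t)).
  { intros t Ht. unfold f, df, sinh, cosh.
    pose proof (exp_pos t); pose proof (exp_pos (-t)).
    auto_derive.
    - repeat split; lra.
    - rewrite !exp_Ropp in *. field. split; [lra|]. split. intro; nra. intro. nra. }
  assert (H : f b < f a).
  { apply (decr_lt f df); [lra| intros; apply Hd; lra|].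
    intros x Hx. unfold df. pose proof (sinh_cosh_gt x ltac:(lra)).
    pose proof (cosh_pos x).
    apply Rdiv_neg_pos; [lra|]. apply Rmult_lt_0_compat; nra. }
  unfold f in H. unfold tanh, sinh, cosh. exact H.
Qed.

Definition q (y : R) : R := if Req_EM_T y 0 then 1 else sinh y / y.

Lemma q_cont y : continuity_pt q y.
Proof.
  destruct (Req_dec y 0) as [->|Hy].
  - unfold continuity_pt, continue_in, limit1_in, limit_in. simpl. unfold R_dist.
    intros eps Heps. destruct (derivable_pt_lim_sinh 0 eps Heps) as [del Hdel].
    exists del. split; [apply cond_pos|]. intros x [[_ Hx0] Hx].
    unfold q. destruct (Req_EM_T x 0) as [e|_]; [congruence|].
    destruct (Req_EM_T 0 0) as [_|n]; [|congruence].
    specialize (Hdel x (not_eq_sym Hx0)). rewrite Rminus_0_r in Hx. specialize (Hdel Hx).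
    rewrite Rplus_0_l, sinh_0, Rminus_0_r in Hdel.
    replace (cosh 0) with 1 in Hdel by (unfold cosh; rewrite Ropp_0, exp_0; field). exact Hdel.
  - apply continuity_pt_filterlim.
    apply (continuous_ext_loc _ (fun t => sinh t / t)).
    + exists (mkposreal _ (Rabs_pos_lt y Hy)). intros z Hz. simpl in Hz.
      change (Rabs (z - y) < Rabs y) in Hz.
      unfold q. destruct (Req_EM_T z 0) as [->|_]; [|reflexivity].
      exfalso. rewrite Rminus_0_l, Rabs_Ropp in Hz. lra.
    + apply continuity_pt_filterlim.
      apply (continuity_pt_div sinh (fun t => t)); auto.
      * apply derivable_continuous_pt, derivable_pt_sinh.
      * apply continuity_pt_id.
Qed.

Definition phit (c x : R) : R := q (x / c) / (c * cosh (x / c)).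

Lemma phit_eq c x : 0 < c -> x <> 0 -> phit c x = tanh (x / c) / x.
Proof.
  intros Hc Hx. unfold phit, q, tanh. destruct (Req_EM_T (x/c) 0) as [e|_].
  - exfalso. apply Hx. apply (Rmult_eq_reg_r (/c)); [|apply Rinv_neq_0_compat; lra].
    rewrite Rmult_0_l. exact e.
  - pose proof (cosh_pos (x/c)). field. repeat split; lra.
Qed.

Lemma cont_div_c c x : 0 < c -> continuous (fun x => x / c) x.
Proof.
  intros Hc. apply continuity_pt_filterlim.
  apply (continuity_pt_div (fun x => x) (fun _ => c)); [apply continuity_pt_id|apply continuity_pt_const; intros ? ?; auto| lra].
Qed.

Lemma phit_cont c x : 0 < c -> continuity_pt (phit c) x.
Proof.
  intros Hc. unfold phit.
  apply (continuity_pt_div (fun x => q (x / c)) (fun x => c * cosh (x / c))).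
  - apply continuity_pt_filterlim.
    apply (continuous_comp (fun x => x / c) q). apply cont_div_c; auto.
    apply continuity_pt_filterlim, q_cont.
  - apply (continuity_pt_mult (fun _ => c) (fun x => cosh (x / c))).
    + apply continuity_pt_const; intros ? ?; auto.
    + apply continuity_pt_filterlim.
      apply (continuous_comp (fun x => x / c) cosh). apply cont_div_c; auto.
      apply continuity_pt_filterlim. apply derivable_continuous_pt, derivable_pt_cosh.
  - pose proof (cosh_pos (x/c)). nra.
Qed.

Lemma phit_decr c x1 x2 : 0 < c -> 0 < x1 -> x1 < x2 -> phit c x2 < phit c x1.
Proof.
  intros Hc H1 H12. rewrite !phit_eq by lra.
  pose proof (psi_decr (x1/c) (x2/c)) as H.
  assert (0 < x1 / c) by (apply Rdiv_lt_0_compat; lra).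
  assert (x1 / c < x2 / c) by (apply Rmult_lt_compat_r; [apply Rinv_0_lt_compat|]; lra).
  specialize (H ltac:(lra) ltac:(lra)).
  replace (tanh (x2/c) / x2) with (tanh (x2/c) / (x2/c) / c) by (field; lra).
  replace (tanh (x1/c) / x1) with (tanh (x1/c) / (x1/c) / c) by (field; lra).
  apply Rmult_lt_compat_r; [apply Rinv_0_lt_compat; lra| exact H].
Qed.

Lemma tanh_bounds y : 0 < y -> 0 < tanh y < 1.
Proof.
  intros Hy. unfold tanh. pose proof (sinh_pos y Hy). pose proof (cosh_pos y).
  assert (sinh y < cosh y) by (unfold sinh, cosh; pose proof (exp_pos (-y)); lra).
  split. apply Rdiv_lt_0_compat; lra. apply (Rmult_lt_reg_r (cosh y)); auto.
  unfold Rdiv. rewrite Rmult_assoc, Rinv_l; lra.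
Qed.

Lemma phit_bound c x : 0 < c -> 0 < x -> 0 < phit c x <= 1 / x.
Proof.
  intros Hc Hx. rewrite phit_eq by lra.
  assert (0 < x / c) by (apply Rdiv_lt_0_compat; lra).
  destruct (tanh_bounds (x/c) H). split.
  apply Rdiv_lt_0_compat; lra.
  apply Rmult_le_compat_r; [left; apply Rinv_0_lt_compat; lra| lra].
Qed.

Definition fB (c X d : R) : R := ln (cosh (sqrt (X + d ^ 2) / c)).

Lemma fB_derive c X d : 0 < c -> 0 <= X -> 0 < d ->
  is_derive (fB c X) d (d * phit c (sqrt (X + d ^ 2)) / c).
Proof.
  intros Hc HX Hd. unfold fB, cosh.
  assert (HXd : 0 < X + d ^ 2) by nra.
  pose proof (sqrt_lt_R0 _ HXd).
  pose proof (exp_pos (sqrt (X + d^2) / c)). pose proof (exp_pos (-(sqrt (X + d^2) / c))).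
  replace (X + d ^ 2) with (X + d * (d * 1)) by ring.
  assert (Hs : 0 < X + d * (d * 1)) by nra.
  auto_derive.
  - repeat split; try lra.
    apply Rmult_lt_0_compat; [|lra]. pose proof (exp_pos (sqrt (X + d * (d * 1)) * / c)).
    pose proof (exp_pos (- (sqrt (X + d * (d * 1)) * / c))). lra.
  - assert (0 < sqrt (X + d * (d * 1))) by (apply sqrt_lt_R0; lra).
    rewrite phit_eq by lra. unfold tanh, sinh, cosh. rewrite !exp_Ropp in *.
    set (u := sqrt (X + d * (d * 1))). unfold Rdiv. 
    pose proof (exp_pos (u * / c)). field. repeat split; try lra. all: try (unfold u; lra). nra.
Qed.

Lemma cont_poly d x : continuous (fun xi => xi ^ 2 + d ^ 2) x.
Proof.
  apply (ex_derive_continuous (K:=R_AbsRing) (V:=R_NormedModule)). auto_derive. auto.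
Qed.

Lemma integrand_cont c d x : 0 < c -> continuous (fun xi => phit c (sqrt (xi ^ 2 + d ^ 2))) x.
Proof.
  intros Hc.
  apply (continuous_comp (fun xi => sqrt (xi ^ 2 + d ^ 2)) (phit c)).
  - apply (continuous_comp (fun xi => xi ^ 2 + d ^ 2) sqrt). apply cont_poly. apply continuous_sqrt.
  - apply continuity_pt_filterlim, phit_cont; auto.
Qed.

Definition Iint (c mu d : R) : R := RInt (fun xi => phit c (sqrt (xi ^ 2 + d ^ 2))) 0 mu.

Lemma Iint_ex c mu d : 0 < c -> ex_RInt (fun xi => phit c (sqrt (xi ^ 2 + d ^ 2))) 0 mu.
Proof. intros Hc. apply (ex_RInt_continuous (V:=R_CompleteNormedModule)). intros; apply integrand_cont; auto. Qed.

Lemma Iint_cont c mu d0 : 0 < c -> 0 <= mu -> continuity_pt (Iint c mu) d0.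
Proof.
  intros Hc Hmu.
  unfold continuity_pt, continue_in, limit1_in, limit_in. simpl. unfold R_dist.
  intros eps Heps.
  set (h := fun s => phit c (sqrt s)).
  set (M := mu ^ 2 + (Rabs d0 + 1) ^ 2).
  assert (Hh : forall s, 0 <= s <= M -> continuity_pt h s).
  { intros s _. unfold h. apply continuity_pt_filterlim.
    apply (continuous_comp sqrt (phit c)). apply continuous_sqrt.
    apply continuity_pt_filterlim, phit_cont; auto. }
  assert (He' : 0 < eps / (mu + 1)) by (apply Rdiv_lt_0_compat; lra).
  destruct (Heine_cor2 Hh (mkposreal _ He')) as [del Hdel]. simpl in Hdel.
  assert (Hdp : 0 < del) by apply cond_pos.
  pose proof (Rabs_pos d0).
  exists (Rmin 1 (del / (2 * Rabs d0 + 1))). split.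
  { apply Rmin_pos; [lra|]. apply Rdiv_lt_0_compat; lra. }
  intros d [_ Hd].
  assert (Hd1 : Rabs (d - d0) < 1) by (eapply Rlt_le_trans; [exact Hd| apply Rmin_l]).
  assert (Hd2 : Rabs (d - d0) < del / (2 * Rabs d0 + 1)) by (eapply Rlt_le_trans; [exact Hd| apply Rmin_r]).
  assert (Hdd : Rabs d <= Rabs d0 + 1).
  { replace d with ((d - d0) + d0) by ring. eapply Rle_trans; [apply Rabs_triang|]. lra. }
  assert (Hsq : Rabs (d ^ 2 - d0 ^ 2) < del).
  { replace (d ^ 2 - d0 ^ 2) with ((d - d0) * (d + d0)) by ring.
    rewrite Rabs_mult.
    assert (Rabs (d + d0) <= 2 * Rabs d0 + 1).
    { eapply Rle_trans; [apply Rabs_triang|]. lra. }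
    assert (Rabs (d - d0) * (2 * Rabs d0 + 1) < del).
    { apply (Rmult_lt_reg_r (/ (2 * Rabs d0 + 1))). apply Rinv_0_lt_compat; lra.
      rewrite Rmult_assoc, Rinv_r by lra. lra. }
    pose proof (Rabs_pos (d - d0)). pose proof (Rabs_pos (d + d0)). nra. }
  unfold Iint.
  rewrite <- (RInt_minus (fun xi => phit c (sqrt (xi ^ 2 + d ^ 2))) (fun xi => phit c (sqrt (xi ^ 2 + d0 ^ 2)))) by (apply Iint_ex; auto).
  eapply Rle_lt_trans.
  { apply abs_RInt_le_const with (M := eps / (mu + 1)); [lra| |].
    - apply (ex_RInt_minus (V:=R_NormedModule)); apply Iint_ex; auto.
    - intros t Ht. left. change (Rabs (h (t ^ 2 + d ^ 2) - h (t ^ 2 + d0 ^ 2)) < eps / (mu + 1)).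
      apply Hdel.
      + split; [nra|]. unfold M. assert (d ^ 2 <= (Rabs d0 + 1) ^ 2).
        { rewrite <- (pow2_abs d). pose proof (Rabs_pos d). nra. } nra.
      + split; [nra|]. unfold M. assert (d0 ^ 2 <= (Rabs d0 + 1) ^ 2).
        { rewrite <- (pow2_abs d0). nra. } nra.
      + replace (t ^ 2 + d ^ 2 - (t ^ 2 + d0 ^ 2)) with (d ^ 2 - d0 ^ 2) by ring. exact Hsq. }
  rewrite Rminus_0_r.
  apply (Rmult_lt_reg_r (mu + 1)); [lra|].
  replace (mu * (eps / (mu + 1)) * (mu + 1)) with (mu * eps) by (field; lra). nra.
Qed.

Definition G (c xim mu d : R) : R :=
  c * (fB c (xim ^ 2) d - fB c (mu ^ 2) d) + mu * Iint c mu d.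

Lemma fB_cont c X d : 0 < c -> 0 <= X -> continuity_pt (fB c X) d.
Proof.
  intros Hc HX. unfold fB. apply continuity_pt_filterlim.
  apply (continuous_comp (fun d => cosh (sqrt (X + d ^ 2) / c)) ln).
  - apply (continuous_comp (fun d => sqrt (X + d ^ 2) / c) cosh).
    + apply (continuous_comp (fun d => sqrt (X + d ^ 2)) (fun x => x / c)).
      * apply (continuous_comp (fun d => X + d ^ 2) sqrt).
        -- apply (ex_derive_continuous (K:=R_AbsRing) (V:=R_NormedModule)). auto_derive. auto.
        -- apply continuous_sqrt.
      * apply cont_div_c; auto.
    + apply continuity_pt_filterlim. apply derivable_continuous_pt, derivable_pt_cosh.
  - apply continuous_ln, cosh_pos.
Qed.

Lemma G_cont c xim mu d : 0 < c -> 0 <= mu -> continuity_pt (G c xim mu) d.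
Proof.
  intros Hc Hmu. unfold G.
  apply (continuity_pt_plus (fun d => c * (fB c (xim ^ 2) d - fB c (mu ^ 2) d)) (fun d => mu * Iint c mu d)).
  - apply (continuity_pt_scal (fun d => (fB c (xim ^ 2) d - fB c (mu ^ 2) d))).
    apply (continuity_pt_minus (fB c (xim ^ 2)) (fB c (mu ^ 2))); apply fB_cont; auto; nra.
  - apply (continuity_pt_scal (Iint c mu)). apply Iint_cont; auto.
Qed.

Lemma sqrt_lt_pos X d1 d2 : 0 <= X -> 0 < d1 -> d1 < d2 -> 0 < sqrt (X + d1 ^ 2) < sqrt (X + d2 ^ 2).
Proof.
  intros. split. apply sqrt_lt_R0; nra. apply sqrt_lt_1; nra.
Qed.

Lemma B_decr c xim mu d1 d2 : 0 < c -> 0 <= mu -> mu <= xim -> 0 < d1 -> d1 < d2 ->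
  (fB c (xim ^ 2) d2 - fB c (mu ^ 2) d2) <= (fB c (xim ^ 2) d1 - fB c (mu ^ 2) d1) /\
  (mu < xim -> (fB c (xim ^ 2) d2 - fB c (mu ^ 2) d2) < (fB c (xim ^ 2) d1 - fB c (mu ^ 2) d1)).
Proof.
  intros Hc Hmu Hmx H1 H12.
  set (f := fun d => fB c (xim ^ 2) d - fB c (mu ^ 2) d).
  set (df := fun d => d * phit c (sqrt (xim ^ 2 + d ^ 2)) / c - d * phit c (sqrt (mu ^ 2 + d ^ 2)) / c).
  assert (Hd : forall d, d1 <= d <= d2 -> is_derive f d (df d)).
  { intros d Hd. unfold f, df.
    apply (is_derive_minus (fB c (xim ^ 2)) (fB c (mu ^ 2))); apply fB_derive; auto; try nra; lra. }
  assert (Hsq : forall d, 0 < d -> 0 < sqrt (mu ^ 2 + d ^ 2) <= sqrt (xim ^ 2 + d ^ 2)).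
  { intros d Hdp. split. apply sqrt_lt_R0; nra. apply sqrt_le_1; nra. }
  split.
  - apply (decr_le f df); [lra|exact Hd|]. intros d Hdd. unfold df.
    destruct (Hsq d ltac:(lra)) as [Ha [Hb|Hb]].
    + pose proof (phit_decr c _ _ Hc Ha Hb).
      assert (0 < d / c) by (apply Rdiv_lt_0_compat; lra).
      unfold Rdiv in *. nra.
    + rewrite Hb. lra.
  - intros Hlt. apply (decr_lt f df); [lra|exact Hd|]. intros d Hdd. unfold df.
    assert (Hb : sqrt (mu ^ 2 + d ^ 2) < sqrt (xim ^ 2 + d ^ 2)) by (apply sqrt_lt_1; nra).
    destruct (Hsq d ltac:(lra)) as [Ha _].
    pose proof (phit_decr c _ _ Hc Ha Hb).
    assert (0 < d / c) by (apply Rdiv_lt_0_compat; lra).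
    unfold Rdiv in *. nra.
Qed.

Lemma I_decr c mu d1 d2 : 0 < c -> 0 <= mu -> 0 < d1 -> d1 < d2 ->
  mu * Iint c mu d2 <= mu * Iint c mu d1 /\ (0 < mu -> mu * Iint c mu d2 < mu * Iint c mu d1).
Proof.
  intros Hc Hmu H1 H12.
  assert (Hs : 0 < mu -> Iint c mu d2 < Iint c mu d1).
  { intros Hm. unfold Iint. apply RInt_lt; [lra| intros; apply integrand_cont; auto| intros; apply integrand_cont; auto|].
    intros x Hx. destruct (sqrt_lt_pos (x ^ 2) d1 d2) as [Ha Hb]; try nra.
    apply phit_decr; auto. }
  destruct (Req_dec mu 0) as [->|Hne].
  - rewrite !Rmult_0_l. split; lra.
  - specialize (Hs ltac:(lra)). split; intros; nra.
Qed.

Lemma G_strict c xim mu d1 d2 : 0 < c -> 0 < xim -> 0 <= mu -> mu <= xim -> 0 < d1 -> d1 < d2 ->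
  G c xim mu d2 < G c xim mu d1.
Proof.
  intros Hc Hx Hmu Hmx H1 H12. unfold G.
  destruct (B_decr c xim mu d1 d2) as [Bl Bs]; auto.
  destruct (I_decr c mu d1 d2) as [Il Is]; auto.
  destruct (Rlt_or_le mu xim) as [Hlt|Hge].
  - specialize (Bs Hlt). nra.
  - specialize (Is ltac:(lra)). nra.
Qed.

Lemma G_lt0 c xim mu d : 0 < c -> 0 < xim -> 0 <= mu -> mu <= xim -> 0 < d ->
  G c xim mu d < G c xim mu 0.
Proof.
  intros Hc Hx Hmu Hmx Hd.
  assert (Hh : G c xim mu d < G c xim mu (d/2)) by (apply G_strict; auto; lra).
  enough (G c xim mu (d/2) <= G c xim mu 0) by lra.
  apply Rnot_lt_le. intro Hlt.
  pose proof (G_cont c xim mu 0 Hc Hmu) as Hcont.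
  unfold continuity_pt, continue_in, limit1_in, limit_in in Hcont. simpl in Hcont. unfold R_dist in Hcont.
  destruct (Hcont (G c xim mu (d/2) - G c xim mu 0)) as [alp [Halp Hal]]; [lra|].
  set (e := Rmin (alp/2) (d/4)).
  assert (He : 0 < e) by (apply Rmin_pos; lra).
  assert (He2 : e <= d/4) by apply Rmin_r.
  assert (He3 : e <= alp/2) by apply Rmin_l.
  specialize (Hal e). assert (Hx1 : (True /\ 0 <> e) /\ Rabs (e - 0) < alp).
  { split; [split; [auto|lra]|]. rewrite Rminus_0_r, Rabs_pos_eq; lra. }
  specialize (Hal Hx1).
  assert (Hs : G c xim mu (d/2) < G c xim mu e) by (apply G_strict; auto; lra).
  apply Rabs_def2 in Hal. lra.
Qed.

Lemma cosh_ratio a b : 0 <= b -> b <= a -> cosh a <= exp (a - b) * cosh b.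
Proof.
  intros Hb Hab. unfold cosh.
  assert (exp (a - b) * ((exp b + exp (- b)) / 2) = (exp a + exp (a - 2 * b)) / 2).
  { replace (exp a) with (exp (a - b) * exp b) by (rewrite <- exp_plus; f_equal; ring).
    replace (exp (a - 2 * b)) with (exp (a - b) * exp (- b)) by (rewrite <- exp_plus; f_equal; ring).
    field. }
  rewrite H. assert (exp (- a) <= exp (a - 2 * b)).
  { destruct (Req_dec (-a) (a - 2*b)) as [e|n]; [rewrite e; lra|]. left; apply exp_increasing; lra. }
  lra.
Qed.

Lemma B_bound c X Y D : 0 < c -> 0 <= Y -> Y <= X -> 0 < D ->
  c * (fB c X D - fB c Y D) <= X / D.
Proof.
  intros Hc HY HYX HD. unfold fB.
  set (a := sqrt (X + D ^ 2) / c). set (b := sqrt (Y + D ^ 2) / c).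
  assert (Hb0 : 0 <= b) by (unfold b; apply Rmult_le_pos; [apply sqrt_pos| left; apply Rinv_0_lt_compat; lra]).
  assert (Hsq : sqrt (Y + D ^ 2) <= sqrt (X + D ^ 2)) by (apply sqrt_le_1; nra).
  assert (Hba : b <= a) by (unfold a, b; apply Rmult_le_compat_r; [left; apply Rinv_0_lt_compat; lra| auto]).
  assert (Hln : ln (cosh a) <= (a - b) + ln (cosh b)).
  { rewrite <- (ln_exp (a - b)). rewrite <- ln_mult by (apply exp_pos || apply cosh_pos).
    destruct (cosh_ratio a b Hb0 Hba) as [Hl|He].
    - left. apply ln_increasing; [apply cosh_pos| auto].
    - rewrite He. lra. }
  assert (Hca : c * (a - b) = sqrt (X + D ^ 2) - sqrt (Y + D ^ 2)) by (unfold a, b; field; lra).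
  assert (HDle : D <= sqrt (Y + D ^ 2)).
  { rewrite <- (sqrt_pow2 D) at 1 by lra. apply sqrt_le_1; nra. }
  assert (Hup : sqrt (X + D ^ 2) <= D + X / D).
  { rewrite <- (sqrt_pow2 (D + X / D)).
    - apply sqrt_le_1; [nra| |].
      + assert (0 <= X / D) by (apply Rdiv_le_0_compat; lra). nra.
      + replace ((D + X / D) ^ 2) with (D ^ 2 + 2 * X + (X / D) ^ 2) by (field; lra).
        assert (0 <= (X / D) ^ 2) by nra. lra.
    - assert (0 <= X / D) by (apply Rdiv_le_0_compat; lra). lra. }
  assert (c * (ln (cosh a) - ln (cosh b)) <= c * (a - b)) by (apply Rmult_le_compat_l; lra).
  lra.
Qed.

Lemma I_bound c mu D : 0 < c -> 0 <= mu -> 0 < D -> mu * Iint c mu D <= mu * mu / D.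
Proof.
  intros Hc Hmu HD.
  assert (Iint c mu D <= RInt (fun _ => 1 / D) 0 mu).
  { unfold Iint. apply RInt_le; auto.
    - apply Iint_ex; auto.
    - apply ex_RInt_const.
    - intros x Hx.
      assert (Hp : 0 < sqrt (x ^ 2 + D ^ 2)) by (apply sqrt_lt_R0; nra).
      destruct (phit_bound c _ Hc Hp) as [_ Hle]. eapply Rle_trans; [exact Hle|].
      apply Rmult_le_compat_l; [lra|]. apply Rinv_le_contravar; auto.
      rewrite <- (sqrt_pow2 D) at 1 by lra. apply sqrt_le_1; nra. }
  rewrite RInt_const in H. unfold scal in H; simpl in H. unfold mult in H; simpl in H.
  replace (mu * mu / D) with (mu * ((mu - 0) * (1 / D))) by (field; lra).
  apply Rmult_le_compat_l; auto.
Qed.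

Lemma G_big c xim mu y : 0 < c -> 0 < xim -> 0 <= mu -> mu <= xim -> 0 < y ->
  exists D, 0 < D /\ G c xim mu D < y.
Proof.
  intros Hc Hx Hmu Hmx Hy.
  set (K := xim ^ 2 + mu * mu).
  assert (HK : 0 < K) by (unfold K; nra).
  exists (2 * K / y). assert (HD : 0 < 2 * K / y) by (apply Rdiv_lt_0_compat; lra).
  split; auto. unfold G.
  pose proof (B_bound c (xim ^ 2) (mu ^ 2) (2 * K / y) Hc ltac:(nra) ltac:(nra) HD).
  pose proof (I_bound c mu (2 * K / y) Hc Hmu HD).
  assert (xim ^ 2 / (2 * K / y) + mu * mu / (2 * K / y) = y / 2) by (unfold K in *; field; repeat split; lra).
  lra.
Qed.

Lemma Rint_RInt f a b : ex_RInt f a b -> Rint f a b = RInt f a b.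
Proof.
  intros Hex. pose proof (ex_RInt_Reals_0 f a b Hex) as pr.
  unfold Rint.
  destruct (epsilon_spec (inhabits 0) (fun l => exists pr : Riemann_integrable f a b, RiemannInt pr = l))
    as [pr' Hpr'].
  { exists (RiemannInt pr). exists pr. reflexivity. }
  rewrite <- Hpr'. symmetry. apply RInt_Reals.
Qed.

Lemma GD_eq xim mu T D : 0 < T -> 0 <= mu -> 0 < D -> G (2 * T) xim mu D = gapRHS xim mu T D.
Proof.
  intros HT Hmu HD. unfold G, gapRHS, fB.
  rewrite ln_div by apply cosh_pos.
  f_equal. f_equal.
  assert (Heq : forall x, phit (2 * T) (sqrt (x ^ 2 + D ^ 2)) = tanh (sqrt (x ^ 2 + D ^ 2) / (2 * T)) / sqrt (x ^ 2 + D ^ 2)).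
  { intros x. apply phit_eq; [lra|]. assert (0 < sqrt (x ^ 2 + D ^ 2)) by (apply sqrt_lt_R0; nra). lra. }
  rewrite Rint_RInt.
  - unfold Iint. apply RInt_ext. intros x _. apply Heq.
  - eapply ex_RInt_ext; [| apply (Iint_ex (2 * T) mu D); lra]. intros x _. apply Heq.
Qed.

Lemma G0_eq xim mu T : 0 < T -> 0 <= mu -> 0 <= xim -> G (2 * T) xim mu 0 = gapThreshold xim mu T.
Proof.
  intros HT Hmu Hxim. unfold G, gapThreshold, fB.
  replace (xim ^ 2 + 0 ^ 2) with (xim ^ 2) by ring.
  replace (mu ^ 2 + 0 ^ 2) with (mu ^ 2) by ring.
  rewrite !sqrt_pow2 by lra.
  rewrite ln_div by apply cosh_pos.
  f_equal. f_equal.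
  assert (Heq : forall x, 0 < x -> phit (2 * T) (sqrt (x ^ 2 + 0 ^ 2)) = tanh (x / (2 * T)) / x).
  { intros x Hxp. replace (x ^ 2 + 0 ^ 2) with (x ^ 2) by ring. rewrite sqrt_pow2 by lra.
    apply phit_eq; lra. }
  rewrite Rint_RInt.
  - unfold Iint. apply RInt_ext. intros x Hx. rewrite Rmin_left in Hx by lra. apply Heq. lra.
  - eapply ex_RInt_ext; [| apply (Iint_ex (2 * T) mu 0); lra]. intros x Hx.
    rewrite Rmin_left in Hx by lra. apply Heq. lra.
Qed.

Theorem mainTheorem6 (xim lam mu T : R)
  (hxim : 0 < xim) (hlam : 0 < lam) (hmu0 : 0 <= mu) (hmu : mu <= xim)
  (hT : 0 < T) :
  ((exists D : R, 0 < D /\ xim / lam = gapRHS xim mu T D)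
     <-> xim / lam < gapThreshold xim mu T)
  /\ (forall D1 D2 : R, 0 < D1 -> 0 < D2 ->
        xim / lam = gapRHS xim mu T D1 ->
        xim / lam = gapRHS xim mu T D2 -> D1 = D2).
Proof.
  assert (Hc : 0 < 2 * T) by lra.
  assert (Hy : 0 < xim / lam) by (apply Rdiv_lt_0_compat; lra).
  split; [split|].
  - intros [D [HD Heq]]. rewrite <- GD_eq in Heq by lra. rewrite <- G0_eq by lra.
    rewrite Heq. apply G_lt0; auto.
  - intros Hlt. rewrite <- G0_eq in Hlt by lra.
    destruct (G_big (2 * T) xim mu (xim / lam)) as [Db [HDb HGb]]; auto.
    destruct (IVT_gen (G (2 * T) xim mu) 0 Db (xim / lam)) as [x [Hx Hgx]].
    + intros d. apply G_cont; auto.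
    + rewrite Rmin_right by lra. rewrite Rmax_left by lra. lra.
    + rewrite Rmin_left in Hx by lra. rewrite Rmax_right in Hx by lra.
      assert (x <> 0) by (intro; subst; lra).
      exists x. split; [lra|]. rewrite <- GD_eq by lra. auto.
  - intros D1 D2 H1 H2 E1 E2. rewrite <- GD_eq in E1, E2 by lra.
    destruct (Rtotal_order D1 D2) as [Hl|[He|Hg]]; auto.
    + pose proof (G_strict (2 * T) xim mu D1 D2 Hc hxim hmu0 hmu H1 Hl). lra.
    + pose proof (G_strict (2 * T) xim mu D2 D1 Hc hxim hmu0 hmu H2 Hg). lra.
Qed.
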